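(* Let $(X,\mathcal T,P,\leq,\{\sigma_x:x\in X\})$ be a typed topological space. For any $x\in X$ and $p\in P$: (1) the type-$p$-connected component $p\vdash C(x)$ is type-$p$-connected; (2) $p\vdash CL_1(p\vdash C(x))=p\vdash C(x)$; and (3) $p\vdash tr(p\vdash C(x))=p\vdash C(x)$.
   Context: A typed topological space $(X,\mathcal T,P,\leq,\{\sigma_x:x\in X\})$ consists of a topological space $(X,\mathcal T)$, a partially ordered set $(P,\leq)$ of types, and for each $x\in X$ a partial function $\sigma_x:\{O\in\mathcal T:x\in O\}\to P$ such that for all $U,V$ in its domain, $\sigma_x(U)\leq\sigma_x(V)$ iff $U\subseteq V$. $U$ is a type-$p$ neighborhood of $x$, written $p\vdash U(x)$, if $U$ is in the domain of $\sigma_x$ and $\sigma_x(U)=p$. $x$ is a $p$-accumulation point of $A$ if every type-$p$ neighborhood of $x$ meets $A$. $p\vdash CL_1(A)=A\cup\{p\text{-accumulation points of }A\}$, $p\vdash CL_n(A)=p\vdash CL_1(p\vdash CL_{n-1}(A))$, $p\vdash tr(A)=\bigcup_{n\ge1}p\vdash CL_n(A)$. A set $A\subseteq X$ is type-$p$-connected if there do not exist two families of type-$p$ neighborhoods $\{p\vdash U(x_i):i\in I\}$ and $\{p\vdash U(x_j):j\in J\}$ with $I\neq\emptyset$, $J\neq\emptyset$, $A=\{x_i:i\in I\}\cup\{x_j:j\in J\}$ and $\left(\bigcup_{i\in I}U(x_i)\right)\cap\left(\bigcup_{j\in J}U(x_j)\right)=\emptyset$. The type-$p$-connected component $p\vdash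 C(x)$ is the union of all type-$p$-connected subsets of $X$ containing $x$. *)

(* Defs.v *)
From HB Require Import structures.
From mathcomp Require Import all_boot all_order.
From mathcomp Require Import boolp classical_sets topology.
Set Implicit Arguments. Unset Strict Implicit. Unset Printing Implicit Defensive.
Import Order.TTheory.
Local Open Scope classical_set_scope.

(* A typed topological space: topological space X, poset P of types, and for
   each x a partial function sigma x from the open sets containing x to P,
   represented as a total function into option P.  The domain of sigma x is
   {U | sigma x U <> None}; it must consist of open sets containing x, and
   on its domain sigma x U <= sigma x V iff U `<=` V. *)
Definition typed_topology (X : topologicalType) (d : Order.disp_t)
  (P : porderType d) (sigma : X -> set X -> option P) : Prop :=
  (forall x U p, sigma x U = Some p -> open U /\ U x) /\
  (forall x U V p q, sigma x U = Some p -> sigma x V = Some q ->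
     ((p <= q)%O <-> U `<=` V)).

Section Typed.
Context (X : topologicalType) (d : Order.disp_t) (P : porderType d)
  (sigma : X -> set X -> option P).

Definition tnbhd (p : P) (x : X) (U : set X) : Prop := sigma x U = Some p.

Definition p_acc (p : P) (A : set X) (x : X) : Prop :=
  forall U, tnbhd p x U -> U `&` A !=set0.

Definition CL1 (p : P) (A : set X) : set X := A `|` p_acc p A.

(* CLn p n A = p |- CL_{n+1}(A) *)
Fixpoint CLn (p : P) (n : nat) (A : set X) : set X :=
  match n with
  | 0 => CL1 p A
  | n.+1 => CL1 p (CLn p n A)
  end.

(* p |- tr(A) = union over n >= 1 of p |- CL_n(A) *)
Definition ptr (p : P) (A : set X) : set X := \bigcup_n CLn p n A.

Definition tconnected (p : P) (A : set X) : Prop :=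
  ~ exists (I J : Type) (xi : I -> X) (Ui : I -> set X)
           (xj : J -> X) (Uj : J -> set X),
      inhabited I /\ inhabited J /\
      (forall i, tnbhd p (xi i) (Ui i)) /\
      (forall j, tnbhd p (xj j) (Uj j)) /\
      A = range xi `|` range xj /\
      (\bigcup_i Ui i) `&` (\bigcup_j Uj j) = set0.

Definition tcomp (p : P) (x : X) : set X :=
  \bigcup_(A in [set A | tconnected p A /\ A x]) A.

End Typed.

(* Main.v *)
Require Import Defs.
From mathcomp Require Import all_boot all_order.
From mathcomp Require Import boolp classical_sets topology.
Local Open Scope classical_set_scope.

Section H.
Context (X : topologicalType) (d : Order.disp_t) (P : porderType d)
  (sigma : X -> set X -> option P) (hsig : typed_topology sigma) (p : P).

Lemma nb_in y U : tnbhd sigma p y U -> U y.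
Proof. by move=> h; have [] := hsig.1 _ _ _ h. Qed.
Arguments nb_in {y U}.

Lemma disjF I J (Ui : I -> set X) (Uj : J -> set X) i j z :
  (\bigcup_i Ui i) `&` (\bigcup_j Uj j) = set0 -> Ui i z -> Uj j z -> False.
Proof.
move=> disj hi hj.
have : (set0 : set X) z by rewrite -disj; split; [exists i|exists j].
by [].
Qed.
Arguments disjF {I J Ui Uj i j z}.

Lemma sep_sub (A : set X) I J (xi : I -> X) Ui (xj : J -> X) Uj :
  tconnected sigma p A -> (forall i, tnbhd sigma p (xi i) (Ui i)) ->
  (forall j, tnbhd sigma p (xj j) (Uj j)) ->
  A `<=` range xi `|` range xj -> (exists i, A (xi i)) -> (exists j, A (xj j)) ->
  (\bigcup_i Ui i) `&` (\bigcup_j Uj j) = set0 -> False.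
Proof.
move=> hA hi hj sub [i0 Ai0] [j0 Aj0] disj; apply: hA.
exists {i : I | A (xi i)}, {j : J | A (xj j)},
  (fun i => xi (proj1_sig i)), (fun i => Ui (proj1_sig i)),
  (fun j => xj (proj1_sig j)), (fun j => Uj (proj1_sig j)).
split; first exact: inhabits (exist _ i0 Ai0).
split; first exact: inhabits (exist _ j0 Aj0).
split; first by move=> [i ?]; exact: hi.
split; first by move=> [j ?]; exact: hj.
split.
- apply/seteqP; split => z.
  + move=> Az; case: (sub z Az) => -[k _ ek]; subst z;
      [left|right]; by exists (exist _ k Az).
  + by case=> -[[k hk] _ <-].
- apply/seteqP; split => z //.
  move=> [[[i hi'] _ Hi] [[j hj'] _ Hj]].
  by case: (disjF disj Hi Hj).
Qed.
Arguments sep_sub {A I J xi Ui xj Uj}.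

Lemma single_conn y : tconnected sigma p [set y].
Proof.
move=> [I [J [xi [Ui [xj [Uj [[i0] [[j0] [hi [hj [hA disj]]]]]]]]]]].
have e1 : xi i0 = y.
  by have : [set y] (xi i0) by rewrite hA; left; exists i0.
have e2 : xj j0 = y.
  by have : [set y] (xj j0) by rewrite hA; right; exists j0.
have h1 := nb_in (hi i0); have h2 := nb_in (hj j0).
rewrite e1 in h1; rewrite e2 in h2.
exact: (disjF disj h1 h2).
Qed.

Lemma acc_conn (C : set X) y I J (xi : I -> X) Ui (xj : J -> X) Uj i0 :
  tconnected sigma p C -> p_acc sigma p C y -> inhabited J ->
  (forall i, tnbhd sigma p (xi i) (Ui i)) ->
  (forall j, tnbhd sigma p (xj j) (Uj j)) ->
  C `|` [set y] = range xi `|` range xj -> xi i0 = y ->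
  (\bigcup_i Ui i) `&` (\bigcup_j Uj j) = set0 -> False.
Proof.
move=> cC acc [j0] hi hj hA e disj.
have hi0 := hi i0; rewrite e in hi0.
have [z [Uz Cz]] := acc _ hi0.
have : (range xi `|` range xj) z by rewrite -hA; left.
case=> -[k _ ek].
- case: (pselect (exists j, C (xj j))) => [ex|nex].
  + apply: (sep_sub cC hi hj _ _ ex disj).
      by move=> w Cw; rewrite -hA; left.
    by exists k; rewrite ek.
  + have : (C `|` [set y]) (xj j0) by rewrite hA; right; exists j0.
    case=> [Cj|ey]; first by apply: nex; exists j0.
    have h1 := nb_in (hi i0); have h2 := nb_in (hj j0).
    rewrite e in h1; rewrite ey in h2.
    exact: (disjF disj h1 h2).
- have h2 := nb_in (hj k); rewrite ek in h2.
  exact: (disjF disj Uz h2).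
Qed.

End H.
Arguments sep_sub {X d P sigma p A I J xi Ui xj Uj}.
Arguments acc_conn {X d P sigma} hsig {p C y I J xi Ui xj Uj i0}.

Theorem theorem2p15 (X : topologicalType) (d : Order.disp_t) (P : porderType d)
  (sigma : X -> set X -> option P) (hsig : typed_topology sigma)
  (x : X) (p : P) :
  tconnected sigma p (tcomp sigma p x) /\
  CL1 sigma p (tcomp sigma p x) = tcomp sigma p x /\
  ptr sigma p (tcomp sigma p x) = tcomp sigma p x.
Proof.
have xC : tcomp sigma p x x.
  by exists [set x] => //; split => //; apply: single_conn.
have conn : tconnected sigma p (tcomp sigma p x).
  move=> [I [J [xi [Ui [xj [Uj [[i0] [[j0] [hi [hj [hA disj]]]]]]]]]]].
  have : (range xi `|` range xj) x by rewrite -hA.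
  case=> -[k _ ek].
  - have : tcomp sigma p x (xj j0) by rewrite hA; right; exists j0.
    move=> [A [cA Ax] Aj].
    apply: (sep_sub cA hi hj _ _ _ disj).
    + by move=> w Aw; rewrite -hA; exists A.
    + by exists k; rewrite ek.
    + by exists j0.
  - have : tcomp sigma p x (xi i0) by rewrite hA; left; exists i0.
    move=> [A [cA Ax] Ai].
    apply: (sep_sub cA hj hi _ _ _ _).
    + by move=> w Aw; rewrite setUC -hA; exists A.
    + by exists k; rewrite ek.
    + by exists i0.
    + by rewrite setIC.
have cl : CL1 sigma p (tcomp sigma p x) = tcomp sigma p x.
  apply/seteqP; split; last by move=> z Cz; left.
  move=> z [//|acc].
  exists (tcomp sigma p x `|` [set z]); last by right.
  split; last by left.
  move=> [I [J [xi [Ui [xj [Uj [[i0] [[j0] [hi [hj [hA disj]]]]]]]]]]].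
  have : (range xi `|` range xj) z by rewrite -hA; right.
  case=> -[k _ ek].
  - exact: (acc_conn hsig conn acc (inhabits j0) hi hj hA ek disj).
  - apply: (acc_conn hsig conn acc (inhabits i0) hj hi _ ek _).
    + by rewrite hA setUC.
    + by rewrite setIC.
split => //; split => //.
have e : forall n, CLn sigma p n (tcomp sigma p x) = tcomp sigma p x.
  by elim => //= n ->.
apply/seteqP; split.
- by move=> z [n _]; rewrite e.
- by move=> z Cz; exists 0%N => //; rewrite e.
Qed.
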